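(* Every Hausdorff and compact $\mathbb{B}$-topological space is normal; every regular and compact $\mathbb{B}$-topological space is normal.
   Context: $\mathbb{B}=\{0,1,tt,ff\}$ is the four-element Boolean algebra with bottom $0$, top $1$, and $tt,ff$ incomparable complements; $\neg$ its complement, $a\to b=\neg a\vee b$. A $\mathbb{B}$-topology on $X$ is $\tau\subseteq\mathbb{B}^X$ containing all constant maps and closed under arbitrary pointwise joins and finite pointwise meets; $\mu$ is closed if $\neg\mu\in\tau$; $\overline{\nu}$ is the meet of all closed sets $\ge\nu$. $\mathrm{sub}_X(\lambda,\mu)=\bigwedge_x(\lambda(x)\to\mu(x))$. $(X,\tau)$ is compact if the constant map $1_X$ satisfies $\mathrm{sub}_X(1_X,\bigvee\Lambda)=\bigvee_{\lambda\in\Lambda}\mathrm{sub}_X(1_X,\lambda)$ for every directed $\Lambda\subseteq\tau$. Specialization $\mathbb{B}$-order: $\Omega(\tau)(x,y)=\bigwedge_{\lambda\in\tau}(\lambda(x)\to\lambda(y))$. The product $(X,\tau)\times(X,\tau)$ is $X\times X$ with the $\mathbb{B}$-topology generated by the constants and $\{\lambda\circ\pi_1,\lambda\circ\pi_2:\lambda\in\tau\}$. $(X,\tau)$ is $T_0$ if $\Omega(\tau)(x,y)=1=\Omega(\tau)(y,x)$ implies $x=y$; $R_1$ if $\Omega(\tau)$ is closed in $(X,\tau)\times(X,\tau)$; Hausdorff if $T_0$ and $R_1$; regular if every $\lambda\in\tau$ equals $\bigvee\{\mu\in\tau:\overline{\mu}\le\lambda\}$; normal if for every open $\lambda$ and closed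 $\mu$ with $\mu\le\lambda$ there is an open $\nu$ with $\mu\le\nu\le\overline{\nu}\le\lambda$. *)

(* Defs.v *)
From Stdlib Require Import Classical ClassicalDescription.

Inductive B : Type := B0 | B1 | Btt | Bff.

Definition bneg (a : B) : B :=
  match a with B0 => B1 | B1 => B0 | Btt => Bff | Bff => Btt end.

Definition bjoin (a b : B) : B :=
  match a, b with
  | B0, c | c, B0 => c
  | B1, _ | _, B1 => B1
  | Btt, Btt => Btt
  | Bff, Bff => Bff
  | _, _ => B1
  end.

Definition bmeet (a b : B) : B := bneg (bjoin (bneg a) (bneg b)).

Definition bimp (a b : B) : B := bjoin (bneg a) b.

Definition ble (a b : B) : Prop := bjoin a b = b.

Definition bsup (P : B -> Prop) : B :=
  if excluded_middle_informative (P B1 \/ (P Btt /\ P Bff)) then B1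
  else if excluded_middle_informative (P Btt) then Btt
  else if excluded_middle_informative (P Bff) then Bff
  else B0.

Definition binf (P : B -> Prop) : B := bneg (bsup (fun c => P (bneg c))).

Definition fle {X : Type} (f g : X -> B) : Prop := forall x, ble (f x) (g x).

Definition constB {X : Type} (a : B) : X -> B := fun _ => a.

Definition fjoin {X : Type} (Lam : (X -> B) -> Prop) : X -> B :=
  fun x => bsup (fun b => exists l, Lam l /\ l x = b).

Definition is_Btopology {X : Type} (tau : (X -> B) -> Prop) : Prop :=
  (forall a : B, tau (constB a)) /\
  (forall Lam : (X -> B) -> Prop, (forall l, Lam l -> tau l) -> tau (fjoin Lam)) /\
  (forall l m, tau l -> tau m -> tau (fun x => bmeet (l x) (m x))).

Definition Bclosed {X : Type} (tau : (X -> B) -> Prop) (mu : X -> B) : Prop :=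
  tau (fun x => bneg (mu x)).

Definition Bclosure {X : Type} (tau : (X -> B) -> Prop) (nu : X -> B) : X -> B :=
  fun x => binf (fun b => exists mu, Bclosed tau mu /\ fle nu mu /\ mu x = b).

Definition subX {X : Type} (l m : X -> B) : B :=
  binf (fun b => exists x, bimp (l x) (m x) = b).

Definition directed {X : Type} (Lam : (X -> B) -> Prop) : Prop :=
  (exists l, Lam l) /\
  (forall l m, Lam l -> Lam m -> exists n, Lam n /\ fle l n /\ fle m n).

Definition Bcompact {X : Type} (tau : (X -> B) -> Prop) : Prop :=
  forall Lam : (X -> B) -> Prop, (forall l, Lam l -> tau l) -> directed Lam ->
    subX (constB B1) (fjoin Lam) =
    bsup (fun b => exists l, Lam l /\ subX (constB B1) l = b).

Definition Omega {X : Type} (tau : (X -> B) -> Prop) (x y : X) : B :=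
  binf (fun b => exists l, tau l /\ bimp (l x) (l y) = b).

Definition prodBtop {X : Type} (tau : (X -> B) -> Prop) : (X * X -> B) -> Prop :=
  fun f => forall sigma : (X * X -> B) -> Prop, is_Btopology sigma ->
    (forall a : B, sigma (constB a)) ->
    (forall l, tau l -> sigma (fun p => l (fst p)) /\ sigma (fun p => l (snd p))) ->
    sigma f.

Definition BT0 {X : Type} (tau : (X -> B) -> Prop) : Prop :=
  forall x y, Omega tau x y = B1 -> Omega tau y x = B1 -> x = y.

Definition BR1 {X : Type} (tau : (X -> B) -> Prop) : Prop :=
  Bclosed (prodBtop tau) (fun p => Omega tau (fst p) (snd p)).

Definition BHausdorff {X : Type} (tau : (X -> B) -> Prop) : Prop :=
  BT0 tau /\ BR1 tau.

Definition Bregular {X : Type} (tau : (X -> B) -> Prop) : Prop :=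
  forall l, tau l ->
    forall x, l x = bsup (fun b => exists mu, tau mu /\ fle (Bclosure tau mu) l /\ mu x = b).

Definition Bnormal {X : Type} (tau : (X -> B) -> Prop) : Prop :=
  forall l mu, tau l -> Bclosed tau mu -> fle mu l ->
    exists nu, tau nu /\ fle mu nu /\ fle nu (Bclosure tau nu) /\ fle (Bclosure tau nu) l.

(* Main.v *)
Require Import Defs.
From Stdlib Require Import Classical ClassicalDescription FunctionalExtensionality.

Ltac bcases := intros; unfold ble, bimp, bmeet in *;
  repeat match goal with b : B |- _ => destruct b end; simpl in *;
  try reflexivity; try congruence; try tauto.

Definition atom (c : B) := c = Btt \/ c = Bff.

Lemma ble_refl a : ble a a. Proof. bcases. Qed.
Lemma ble_trans a b c : ble a b -> ble b c -> ble a c. Proof. bcases. Qed.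
Lemma ble_antisym a b : ble a b -> ble b a -> a = b. Proof. bcases. Qed.
Lemma bneg_inv a : bneg (bneg a) = a. Proof. bcases. Qed.
Lemma bneg_anti a b : ble a b -> ble (bneg b) (bneg a). Proof. bcases. Qed.
Lemma ble0 b : ble B0 b. Proof. bcases. Qed.
Lemma ble_top b : ble b B1. Proof. bcases. Qed.
Lemma join_lub a b s : ble a s -> ble b s -> ble (bjoin a b) s. Proof. bcases. Qed.
Lemma join_ub1 a b : ble a (bjoin a b). Proof. bcases. Qed.
Lemma join_ub2 a b : ble b (bjoin a b). Proof. bcases. Qed.
Lemma join_mono a b a' b' : ble a a' -> ble b b' -> ble (bjoin a b) (bjoin a' b'). Proof. bcases. Qed.
Lemma meet_le1 a b : ble (bmeet a b) a. Proof. bcases. Qed.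
Lemma meet_le2 a b : ble (bmeet a b) b. Proof. bcases. Qed.
Lemma meet_glb c a b : ble c a -> ble c b -> ble c (bmeet a b). Proof. bcases. Qed.
Lemma meet_glb_inv c a b : ble c (bmeet a b) -> ble c a /\ ble c b. Proof. bcases. Qed.
Lemma meet_mono a b a' b' : ble a a' -> ble b b' -> ble (bmeet a b) (bmeet a' b'). Proof. bcases. Qed.
Lemma meet_shuffle a b c d : ble (bmeet (bmeet a b) (bmeet c d)) (bmeet (bmeet a c) (bmeet b d)). Proof. bcases. Qed.
Lemma bimp1 b : bimp B1 b = b. Proof. bcases. Qed.
Lemma atom_neg c a : atom c -> ~ ble c a -> ble c (bneg a). Proof. unfold atom; bcases. Qed.
Lemma two_atoms s : ble Btt s -> ble Bff s -> s = B1. Proof. bcases. Qed.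
Lemma le_B0 a : ble a B0 -> a = B0. Proof. bcases. Qed.
Lemma bimp_refl a : bimp a a = B1. Proof. bcases. Qed.
Lemma neg_imp c a b : ble c a -> ble c (bneg b) -> ble c (bneg (bimp a b)). Proof. bcases. Qed.
Lemma join_negmu_1 n m : bjoin n (bneg m) = B1 -> ble m n. Proof. bcases. Qed.
Lemma neg_join a b : bneg (bjoin a b) = bmeet (bneg a) (bneg b). Proof. bcases. Qed.
Lemma neg_meet_neg a c : bneg (bmeet (bneg a) c) = bjoin a (bneg c). Proof. bcases. Qed.
Lemma meet0_join a b c d : bmeet a c = B0 -> bmeet b d = B0 -> bmeet (bmeet a b) (bjoin c d) = B0.
Proof. bcases. Qed.
Lemma disj_le u v c : bmeet u v = B0 -> ble (bmeet u c) (bmeet (bneg v) c). Proof. bcases. Qed.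
Lemma cov_le v l c : ble c (bjoin v l) -> ble (bmeet (bneg v) c) l. Proof. bcases. Qed.
Lemma atom_meet c a : ble c a -> ble c (bmeet a c). Proof. bcases. Qed.

Lemma bsup_ub (P : B -> Prop) b : P b -> ble b (bsup P).
Proof.
  intro H; unfold bsup;
  repeat destruct excluded_middle_informative; destruct b; try reflexivity; exfalso; tauto.
Qed.

Lemma bsup_lub (P : B -> Prop) s : (forall b, P b -> ble b s) -> ble (bsup P) s.
Proof.
  intro H; pose proof (H B1) as H1; pose proof (H Btt) as H2; pose proof (H Bff) as H3.
  unfold bsup; repeat destruct excluded_middle_informative; unfold ble in *;
  destruct s; simpl in *; intuition congruence.
Qed.

Lemma bsup_atom (P : B -> Prop) c : atom c -> ble c (bsup P) -> exists b, P b /\ ble c b.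
Proof.
  unfold atom, bsup; intros Hc; repeat destruct excluded_middle_informative; intro Hle;
  repeat match goal with H : _ \/ _ |- _ => destruct H end;
  repeat match goal with H : _ /\ _ |- _ => destruct H end;
  subst; unfold ble in *; simpl in *; try discriminate;
  first [exists B1; split; [assumption|reflexivity]
        | exists Btt; split; [assumption|reflexivity]
        | exists Bff; split; [assumption|reflexivity]].
Qed.

Lemma binf_lb (P : B -> Prop) b : P b -> ble (binf P) b.
Proof.
  intro H. unfold binf. rewrite <- (bneg_inv b). apply bneg_anti. apply bsup_ub.
  rewrite bneg_inv. exact H.
Qed.

Lemma binf_glb (P : B -> Prop) s : (forall b, P b -> ble s b) -> ble s (binf P).
Proof.
  intro H. unfold binf. rewrite <- (bneg_inv s). apply bneg_anti. apply bsup_lub. intros c Hc.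
  rewrite <- (bneg_inv c). apply bneg_anti. apply H. exact Hc.
Qed.

Lemma bsup_ext (P Q : B -> Prop) : (forall b, P b -> Q b) -> (forall b, Q b -> P b) -> bsup P = bsup Q.
Proof.
  intros H1 H2. apply ble_antisym; apply bsup_lub; intros; apply bsup_ub; auto.
Qed.

Lemma subX1_ge {X} (f : X -> B) c : (forall x, ble c (f x)) -> ble c (subX (constB B1) f).
Proof.
  intro H. unfold subX. apply binf_glb. intros b [x Hx]. subst b. unfold constB.
  rewrite bimp1. apply H.
Qed.

Lemma subX1_le {X} (f : X -> B) c x : ble c (subX (constB B1) f) -> ble c (f x).
Proof.
  intro H. eapply ble_trans; [exact H|]. unfold subX. rewrite <- (bimp1 (f x)).
  apply binf_lb. exists x. reflexivity.
Qed.

Lemma open_const {X} (tau : (X->B)->Prop) a : is_Btopology tau -> tau (fun _ => a).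
Proof. intros [Hc _]. exact (Hc a). Qed.

Lemma open_join {X} (tau : (X->B)->Prop) f g : is_Btopology tau -> tau f -> tau g ->
  tau (fun x => bjoin (f x) (g x)).
Proof.
  intros [Hc [Hj Hm]] Hf Hg.
  assert (E : (fun x => bjoin (f x) (g x)) = fjoin (fun l => l = f \/ l = g)).
  { apply functional_extensionality; intro x. unfold fjoin. apply ble_antisym.
    - apply join_lub; apply bsup_ub; [exists f|exists g]; auto.
    - apply bsup_lub. intros b [l [[-> | ->] <-]]; [apply join_ub1|apply join_ub2]. }
  rewrite E. apply Hj. intros l [-> | ->]; auto.
Qed.

Lemma open_meet {X} (tau : (X->B)->Prop) f g : is_Btopology tau -> tau f -> tau g ->
  tau (fun x => bmeet (f x) (g x)).
Proof. intros [Hc [Hj Hm]] Hf Hg. apply Hm; auto. Qed.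

Lemma open_meetc {X} (tau : (X->B)->Prop) f c : is_Btopology tau -> tau f ->
  tau (fun x => bmeet (f x) c).
Proof. intros [Hc [Hj Hm]] Hf. exact (Hm _ _ Hf (Hc c)). Qed.

Lemma closed_join {X} (tau : (X->B)->Prop) f g : is_Btopology tau -> Bclosed tau f -> Bclosed tau g ->
  Bclosed tau (fun x => bjoin (f x) (g x)).
Proof.
  intros T Hf Hg. unfold Bclosed in *.
  replace (fun x => bneg (bjoin (f x) (g x))) with (fun x => bmeet (bneg (f x)) (bneg (g x))).
  - apply open_meet; auto.
  - apply functional_extensionality; intro x; rewrite neg_join; reflexivity.
Qed.

Lemma cl_closed {X} (tau : (X->B)->Prop) nu : is_Btopology tau -> Bclosed tau (Bclosure tau nu).
Proof.
  intros [Hc [Hj Hm]]. unfold Bclosed, Bclosure.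
  assert (E : (fun x => bneg (binf (fun b => exists mu, Bclosed tau mu /\ fle nu mu /\ mu x = b)))
     = fjoin (fun l => exists m, Bclosed tau m /\ fle nu m /\ l = (fun x => bneg (m x)))).
  { apply functional_extensionality; intro x. unfold binf, fjoin. rewrite bneg_inv.
    apply bsup_ext.
    - intros b [mu [H1 [H2 H3]]]. exists (fun x => bneg (mu x)). split.
      + exists mu; auto.
      + rewrite H3, bneg_inv. reflexivity.
    - intros b [l [[m [H1 [H2 ->]]] H3]]. exists m. split; [|split]; auto.
      rewrite <- H3, bneg_inv. reflexivity. }
  rewrite E. apply Hj. intros l [m [H1 [_ ->]]]. exact H1.
Qed.

Lemma cl_ge {X} (tau : (X->B)->Prop) nu : fle nu (Bclosure tau nu).
Proof. intro x; unfold Bclosure; apply binf_glb; intros b [mu [_ [H <-]]]; apply H. Qed.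

Lemma cl_le {X} (tau : (X->B)->Prop) nu m : Bclosed tau m -> fle nu m -> fle (Bclosure tau nu) m.
Proof. intros H1 H2 x; apply binf_lb; exists m; auto. Qed.

Definition Reg' {X} (tau : (X->B)->Prop) := forall l, tau l -> forall x c, atom c -> ble c (l x) ->
  exists nu m, tau nu /\ Bclosed tau m /\ fle nu m /\ fle m l /\ ble c (nu x).

Lemma reg_reg' {X} (tau : (X->B)->Prop) : is_Btopology tau -> Bregular tau -> Reg' tau.
Proof.
  intros T R l Hl x c Hc Hcx. rewrite (R l Hl x) in Hcx.
  destruct (bsup_atom _ _ Hc Hcx) as [b [[nu [Hnu [Hcl <-]]] Hb]].
  exists nu, (Bclosure tau nu). repeat split; auto using cl_closed, cl_ge.
Qed.

Lemma reg'_normal {X} (tau : (X->B)->Prop) : is_Btopology tau -> Bcompact tau -> Reg' tau -> Bnormal tau.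
Proof.
  intros T C R l mu Hl Hmu Hle.
  set (D := fun d : X -> B => exists nu m, tau nu /\ Bclosed tau m /\ fle nu m /\ fle m l /\
              d = (fun x => bjoin (nu x) (bneg (mu x)))).
  assert (D0 : D (fun x => bjoin B0 (bneg (mu x)))).
  { exists (constB B0), (constB B0). repeat split;
      first [exact (proj1 T _) | intro; apply ble_refl | intro; apply ble0 | idtac]. }
  assert (Dop : forall d, D d -> tau d).
  { intros d [nu [m [H1 [_ [_ [_ ->]]]]]]. apply open_join; auto. }
  assert (Ddir : directed D).
  { split. { eexists; exact D0. }
    intros d1 d2 [nu1 [m1 [A1 [B1' [C1 [E1 ->]]]]]] [nu2 [m2 [A2 [B2 [C2 [E2 ->]]]]]].
    exists (fun x => bjoin (bjoin (nu1 x) (nu2 x)) (bneg (mu x))). repeat split.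
    - exists (fun x => bjoin (nu1 x) (nu2 x)), (fun x => bjoin (m1 x) (m2 x)). repeat split.
      + apply open_join; auto.
      + apply closed_join; auto.
      + intro x; apply join_mono; auto.
      + intro x; apply join_lub; auto.
    - intro x; apply join_mono; [apply join_ub1|apply ble_refl].
    - intro x; apply join_mono; [apply join_ub2|apply ble_refl]. }
  assert (Cov : forall x c, atom c -> ble c (fjoin D x)).
  { intros x c Hc. unfold fjoin.
    destruct (classic (ble c (bneg (mu x)))) as [H|H].
    - eapply ble_trans; [|apply bsup_ub; exists (fun x => bjoin B0 (bneg (mu x))); split; [exact D0|reflexivity]].
      eapply ble_trans; [exact H|apply join_ub2].
    - assert (Hc' : ble c (mu x)).
      { rewrite <- (bneg_inv (mu x)). apply atom_neg; auto. }
      destruct (R l Hl x c Hc (ble_trans _ _ _ Hc' (Hle x))) as [nu [m [A1 [B1' [C1 [E1 F1]]]]]].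
      eapply ble_trans; [|apply bsup_ub; exists (fun x => bjoin (nu x) (bneg (mu x))); split;
        [exists nu, m; repeat split; auto|reflexivity]].
      eapply ble_trans; [exact F1|apply join_ub1]. }
  pose proof (C D Dop Ddir) as HC.
  assert (G : forall c, atom c -> exists d, D d /\ forall x, ble c (d x)).
  { intros c Hc. assert (H : ble c (subX (constB B1) (fjoin D))) by (apply subX1_ge; auto).
    rewrite HC in H. destruct (bsup_atom _ _ Hc H) as [b [[d [Hd <-]] Hb]].
    exists d; split; auto. intro x; eapply subX1_le; exact Hb. }
  destruct (G Btt (or_introl eq_refl)) as [d1 [Hd1 H1]].
  destruct (G Bff (or_intror eq_refl)) as [d2 [Hd2 H2]].
  destruct (proj2 Ddir d1 d2 Hd1 Hd2) as [d3 [Hd3 [L1 L2]]].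
  destruct Hd3 as [nu [m [A [B' [C' [E ->]]]]]].
  exists nu. repeat split; auto.
  - intro x. apply join_negmu_1. apply two_atoms.
    + eapply ble_trans; [apply H1|apply L1].
    + eapply ble_trans; [apply H2|apply L2].
  - apply cl_ge.
  - intro x. eapply ble_trans; [apply cl_le; eauto|apply E].
Qed.

Definition Rect {X} (tau : (X->B)->Prop) (f : X*X -> B) : Prop :=
  forall x y c, atom c -> ble c (f (x,y)) -> exists u v, tau u /\ tau v /\ ble c (u x) /\ ble c (v y) /\
    forall p q, ble (bmeet (u p) (v q)) (f (p,q)).

Lemma rect_top {X} (tau : (X->B)->Prop) : is_Btopology tau -> is_Btopology (Rect tau).
Proof.
  intros T. split; [|split].
  - intros a x y c Hc H. exists (constB a), (constB a). repeat split; auto;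
      try exact (proj1 T a). intros; apply meet_le1.
  - intros Lam HL x y c Hc H. unfold fjoin in H.
    destruct (bsup_atom _ _ Hc H) as [b [[g [Hg <-]] Hb]].
    destruct (HL g Hg x y c Hc Hb) as [u [v [A1 [A2 [A3 [A4 A5]]]]]].
    exists u, v. repeat split; auto. intros p q. eapply ble_trans; [apply A5|].
    unfold fjoin; apply bsup_ub; exists g; auto.
  - intros f g Hf Hg x y c Hc H. destruct (meet_glb_inv _ _ _ H) as [H1 H2].
    destruct (Hf x y c Hc H1) as [u1 [v1 [A1 [A2 [A3 [A4 A5]]]]]].
    destruct (Hg x y c Hc H2) as [u2 [v2 [B1' [B2 [B3 [B4 B5]]]]]].
    exists (fun p => bmeet (u1 p) (u2 p)), (fun p => bmeet (v1 p) (v2 p)). repeat split.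
    + apply open_meet; auto.
    + apply open_meet; auto.
    + apply meet_glb; auto.
    + apply meet_glb; auto.
    + intros p q. eapply ble_trans; [apply meet_shuffle|]. apply meet_mono; auto.
Qed.

Lemma Omega_refl {X} (tau : (X->B)->Prop) p : Omega tau p p = B1.
Proof.
  unfold Omega, binf.
  assert (E : bsup (fun c => exists l, tau l /\ bimp (l p) (l p) = bneg c) = B0).
  { apply ble_antisym; [|apply ble0]. apply bsup_lub. intros b [l [_ H]].
    rewrite bimp_refl in H. rewrite <- (bneg_inv b), <- H. apply ble_refl. }
  rewrite E. reflexivity.
Qed.

Lemma Omega_le {X} (tau : (X->B)->Prop) l x y : tau l -> ble (Omega tau x y) (bimp (l x) (l y)).
Proof. intro H. apply binf_lb. exists l; auto. Qed.

Lemma haus_reg' {X} (tau : (X->B)->Prop) : is_Btopology tau -> Bcompact tau -> BR1 tau -> Reg' tau.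
Proof.
  intros T C H1 l Hl x c Hc Hcx.
  assert (R : Rect tau (fun p => bneg (Omega tau (fst p) (snd p)))).
  { apply H1.
    - apply rect_top; auto.
    - apply (proj1 (rect_top _ T)).
    - intros l' Hl'. split.
      + intros a b c' Hc' H. exists l', (constB B1). repeat split; auto;
          try exact (proj1 T B1); try apply ble_top. intros; apply meet_le1.
      + intros a b c' Hc' H. exists (constB B1), l'. repeat split; auto;
          try exact (proj1 T B1); try apply ble_top. intros; apply meet_le2. }
  set (D := fun w : X -> B => exists u v, tau u /\ tau v /\ ble c (u x) /\
              (forall p, bmeet (u p) (v p) = B0) /\ w = (fun y => bjoin (v y) (l y))).
  assert (D0 : D (fun y => bjoin B0 (l y))).
  { exists (constB B1), (constB B0). repeat split; try exact (proj1 T _); try apply ble_top. }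
  assert (Dop : forall d, D d -> tau d).
  { intros d [u [v [_ [H [_ [_ ->]]]]]]. apply open_join; auto. }
  assert (Ddir : directed D).
  { split. { eexists; exact D0. }
    intros d1 d2 [u1 [v1 [A1 [A2 [A3 [A4 ->]]]]]] [u2 [v2 [B1' [B2 [B3 [B4 ->]]]]]].
    exists (fun y => bjoin (bjoin (v1 y) (v2 y)) (l y)). repeat split.
    - exists (fun p => bmeet (u1 p) (u2 p)), (fun p => bjoin (v1 p) (v2 p)). repeat split.
      + apply open_meet; auto.
      + apply open_join; auto.
      + apply meet_glb; auto.
      + intro p; apply meet0_join; auto.
    - intro y; apply join_mono; [apply join_ub1|apply ble_refl].
    - intro y; apply join_mono; [apply join_ub2|apply ble_refl]. }
  assert (Cov : forall y, ble c (fjoin D y)).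
  { intros y. unfold fjoin.
    destruct (classic (ble c (l y))) as [H|H].
    - eapply ble_trans; [|apply bsup_ub; exists (fun y => bjoin B0 (l y)); split; [exact D0|reflexivity]].
      eapply ble_trans; [exact H|apply join_ub2].
    - assert (Hc' : ble c (bneg (Omega tau x y))).
      { eapply ble_trans; [|apply bneg_anti, (Omega_le _ l); auto].
        apply neg_imp; auto. apply atom_neg; auto. }
      destruct (R x y c Hc Hc') as [u [v [A1 [A2 [A3 [A4 A5]]]]]].
      assert (Dis : forall p, bmeet (u p) (v p) = B0).
      { intro p. apply le_B0. pose proof (A5 p p) as Q. simpl in Q.
        rewrite Omega_refl in Q. exact Q. }
      eapply ble_trans; [|apply bsup_ub; exists (fun y => bjoin (v y) (l y)); split;
        [exists u, v; repeat split; auto|reflexivity]].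
      eapply ble_trans; [exact A4|apply join_ub1]. }
  pose proof (C D Dop Ddir) as HC.
  assert (H : ble c (subX (constB B1) (fjoin D))) by (apply subX1_ge; auto).
  rewrite HC in H. destruct (bsup_atom _ _ Hc H) as [b [[d [Hd <-]] Hb]].
  destruct Hd as [u [v [A1 [A2 [A3 [A4 ->]]]]]].
  assert (Hv : forall y, ble c (bjoin (v y) (l y))).
  { intro y. exact (subX1_le _ _ y Hb). }
  exists (fun y => bmeet (u y) c), (fun y => bmeet (bneg (v y)) c). repeat split.
  - apply open_meetc; auto.
  - unfold Bclosed.
    replace (fun y => bneg (bmeet (bneg (v y)) c)) with (fun y => bjoin (v y) (bneg c)).
    + apply open_join; auto. exact (proj1 T _).
    + apply functional_extensionality; intro y; rewrite neg_meet_neg; reflexivity.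
  - intro y; apply disj_le; auto.
  - intro y; apply cov_le; auto.
  - apply atom_meet; auto.
Qed.

Theorem mainTheorem20 (X : Type) (tau : (X -> B) -> Prop) :
  is_Btopology tau -> Bcompact tau ->
  (BHausdorff tau -> Bnormal tau) /\ (Bregular tau -> Bnormal tau).
Proof.
  intros T C. split.
  - intros [_ H1]. apply reg'_normal; auto. apply haus_reg'; auto.
  - intros R. apply reg'_normal; auto. apply reg_reg'; auto.
Qed.
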